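(* Let $G$ be a complete geometric graph on $n$ vertices. Then every blocker for $\mathcal{T}_{\leq 3}(G)$ has exactly $n-1$ edges.
   Context: A geometric graph is a graph whose vertices are points in the plane in general position (no three collinear) and whose edges are straight segments between pairs of vertices; $G$ is complete if all pairs of vertices are joined. $\mathcal{T}_{\leq k}(G)$ denotes the family of all simple (non-crossing) spanning trees of $G$ of (graph) diameter at most $k$. A subgraph $B$ blocks a family $\mathcal{F}$ of subgraphs if it shares at least one edge with every member of $\mathcal{F}$; a blocker of $\mathcal{F}$ is a subgraph that blocks $\mathcal{F}$ and has the smallest possible number of edges among all subgraphs blocking $\mathcal{F}$. *)

(* Defs.v *)
From mathcomp Require Import all_boot all_order all_algebra.
Set Implicit Arguments. Unset Strict Implicit. Unset Printing Implicit Defensive.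
Import Order.TTheory GRing.Theory Num.Theory.
Local Open Scope ring_scope.

Section Geo.
Variable R : realFieldType.

Definition orient (a b c : R * R) : R :=
  (b.1 - a.1) * (c.2 - a.2) - (b.2 - a.2) * (c.1 - a.1).

Definition general_position (n : nat) (p : 'I_n -> R * R) : Prop :=
  forall i j k : 'I_n, i != j -> j != k -> i != k ->
    orient (p i) (p j) (p k) != 0.

Definition on_seg (a b x : R * R) : Prop :=
  exists t : R, 0 <= t <= 1 /\
    x = (a.1 + t * (b.1 - a.1), a.2 + t * (b.2 - a.2)).

Definition on_edge (n : nat) (p : 'I_n -> R * R) (e : {set 'I_n}) (x : R * R)
  : Prop :=
  exists u v : 'I_n, u != v /\ e = [set u; v] /\ on_seg (p u) (p v) x.

Definition cross (n : nat) (p : 'I_n -> R * R) (e f : {set 'I_n}) : Prop :=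
  exists x : R * R, on_edge p e x /\ on_edge p f x /\
    ~ (exists v : 'I_n, v \in e /\ v \in f /\ x = p v).

Definition simple_geo (n : nat) (p : 'I_n -> R * R) (T : {set {set 'I_n}})
  : Prop :=
  forall e f, e \in T -> f \in T -> e != f -> ~ cross p e f.
End Geo.

Definition complete_edges (n : nat) : {set {set 'I_n}} :=
  [set e : {set 'I_n} | #|e| == 2%N].

Definition adj (n : nat) (T : {set {set 'I_n}}) : rel 'I_n :=
  fun u v => [set u; v] \in T.

Definition dist_le (n : nat) (T : {set {set 'I_n}}) (k : nat) (u v : 'I_n)
  : Prop :=
  exists s : seq 'I_n, (size s <= k)%N /\ path (adj T) u s /\ last u s = v.

Definition connected_graph (n : nat) (T : {set {set 'I_n}}) : Prop :=
  forall u v : 'I_n, exists s : seq 'I_n, path (adj T) u s /\ last u s = v.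

Definition acyclic (n : nat) (T : {set {set 'I_n}}) : Prop :=
  forall c : seq 'I_n, uniq c -> (3 <= size c)%N -> ~~ cycle (adj T) c.

Definition spanning_tree (n : nat) (T : {set {set 'I_n}}) : Prop :=
  T \subset complete_edges n /\ connected_graph T /\ acyclic T.

(* The family T_{<= k}(G): simple spanning trees of diameter at most k. *)
Definition simple_trees_diam_le (R : realFieldType) (n : nat)
  (p : 'I_n -> R * R) (k : nat) (T : {set {set 'I_n}}) : Prop :=
  spanning_tree T /\ simple_geo p T /\ (forall u v, dist_le T k u v).

Definition blocks (n : nat) (F : {set {set 'I_n}} -> Prop)
  (B : {set {set 'I_n}}) : Prop :=
  forall T, F T -> exists e, e \in B /\ e \in T.

Definition blocker (n : nat) (F : {set {set 'I_n}} -> Prop)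
  (B : {set {set 'I_n}}) : Prop :=
  B \subset complete_edges n /\ blocks F B /\
  forall B' : {set {set 'I_n}}, B' \subset complete_edges n -> blocks F B' -> (#|B| <= #|B'|)%N.

(* Main.v *)
Require Import Defs.
From mathcomp Require Import all_boot all_order all_algebra.
From mathcomp Require Import ring lra zify.
Set Implicit Arguments. Unset Strict Implicit. Unset Printing Implicit Defensive.
Import Order.TTheory GRing.Theory Num.Theory.

Module Geo.
Local Open Scope ring_scope.

Section G.
Variable R : realFieldType.
Implicit Types A B C X Q S U W : R * R.

Lemma orient_aff A B X : on_seg A B X -> exists t : R, 0 <= t <= 1 /\
  (forall Q S, orient Q S X = (1 - t) * orient Q S A + t * orient Q S B) /\
  (t = 0 -> X = A).
Proof.
case=> t [ht ->]; exists t; split=> //; split.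
  by move=> Q S; rewrite /orient /=; ring.
by move=> ->; case: A => a1 a2 /=; rewrite !mul0r !addr0.
Qed.

Lemma orient_xx Q S : orient Q S Q = 0.
Proof. by rewrite /orient; ring. Qed.
Lemma orient_yy Q S : orient Q S S = 0.
Proof. by rewrite /orient; ring. Qed.
Lemma orient_sw Q S X : orient Q X S = - orient Q S X.
Proof. by rewrite /orient; ring. Qed.

Lemma on_seg_sym A B X : on_seg A B X -> on_seg B A X.
Proof.
case=> t [/andP[t0 t1] ->]; exists (1 - t); split.
  by apply/andP; split; lra.
by congr (_, _); ring.
Qed.

Lemma shared M Q1 Q2 X : orient M Q1 Q2 != 0 ->
  on_seg M Q1 X -> on_seg M Q2 X -> X = M.
Proof.
move=> hO /orient_aff [t [_ [h1 _]]] /orient_aff [s [_ [h2 h0]]].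
apply: h0; have := h1 M Q1; rewrite h2 orient_xx orient_yy !mulr0 !add0r.
by move=> /eqP; rewrite mulf_eq0 (negbTE hO) orbF => /eqP.
Qed.

Lemma key U A C W W' X (sg : R) :
  orient C W U != 0 -> 0 < sg * orient U A C ->
  0 <= sg * orient U A W -> sg * orient U C W < 0 ->
  (sg * orient U A W' < 0 \/ 0 < sg * orient U C W') ->
  on_seg C W X -> on_seg U W' X -> False.
Proof.
move=> hO hAC hAW hCW hW' /orient_aff [s [/andP[s0 s1] [h1 _]]]
  /orient_aff [t [/andP[t0 t1] [h2 _]]].
have tp : 0 < t.
  rewrite lt_neqAle t0 andbT; apply: contraNneq hO => t00.
  have := h1 C W; rewrite h2 -t00 orient_xx orient_yy.
  by rewrite !mulr0 mul0r !addr0 subr0 mul1r => ->.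
case: hW' => hW'.
- have e : sg * orient U A X = t * (sg * orient U A W').
    by rewrite h2 orient_xx; ring.
  have : sg * orient U A X < 0 by rewrite e pmulr_rlt0.
  rewrite h1 mulrDr.
  have : 0 <= sg * ((1 - s) * orient U A C) + sg * (s * orient U A W).
    rewrite mulrCA [X in _ + X]mulrCA; apply: addr_ge0; apply: mulr_ge0 => //;
      [by rewrite subr_ge0 | exact: ltW].
  by move=> a b; have := lt_le_trans b a; rewrite ltxx.
- have e : sg * orient U C X = t * (sg * orient U C W').
    by rewrite h2 orient_xx; ring.
  have : 0 < sg * orient U C X by rewrite e mulr_gt0.
  rewrite h1 orient_yy mulr0 add0r mulrCA.
  have : s * (sg * orient U C W) <= 0 by rewrite mulr_ge0_le0 // ltW.
  by move=> a b; have := le_lt_trans a b; rewrite ltxx.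
Qed.
End G.

End Geo.
Import Geo.

Lemma set2_eq (T : finType) (u v P Q : T) : u != v ->
  [set u; v] = [set P; Q] -> (u = P /\ v = Q) \/ (u = Q /\ v = P).
Proof.
move=> huv he.
have hu : u \in [set P; Q] by rewrite -he set21.
have hv : v \in [set P; Q] by rewrite -he set22.
have hP : P \in [set u; v] by rewrite he set21.
have hQ : Q \in [set u; v] by rewrite he set22.
case/set2P: hu => hu; case/set2P: hv => hv; subst; auto;
  by rewrite eqxx in huv.
Qed.

Lemma set2_eq' (T : finType) (u v P Q : T) :
  [set u; v] = [set P; Q] -> (u = P /\ v = Q) \/ (u = Q /\ v = P).
Proof.
case: (eqVneq u v) => [<-|]; last exact: set2_eq.
rewrite setUid => he.
have hP : P \in [set u] by rewrite he set21.
have hQ : Q \in [set u] by rewrite he set22.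
by move: hP hQ; rewrite !inE => /eqP-> /eqP->; auto.
Qed.

Section Dist.
Variables (n : nat) (T : {set {set 'I_n}}).

Lemma dist0 x : dist_le T 0 x x.
Proof. by exists [::]. Qed.
Lemma dist1 x y : adj T x y -> dist_le T 1 x y.
Proof. by move=> h; exists [:: y]; rewrite /= h. Qed.
Lemma dist_cat k1 k2 x y z : dist_le T k1 x y -> dist_le T k2 y z ->
  dist_le T (k1 + k2) x z.
Proof.
case=> s1 [h1 [p1 l1]] [s2 [h2 [p2 l2]]]; exists (s1 ++ s2).
by rewrite size_cat leq_add // cat_path p1 last_cat l1 p2 l2.
Qed.
Lemma dist_mono k k' x y : (k <= k')%N -> dist_le T k x y -> dist_le T k' x y.
Proof. by move=> hk [s [h1 h2]]; exists s; rewrite (leq_trans h1 hk). Qed.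
End Dist.

Section Tree.
Variables (R : realFieldType) (n : nat) (p : 'I_n -> R * R).
Hypothesis gp : general_position p.
Variables (u c : 'I_n) (K : {set 'I_n}).
Hypotheses (uc : u != c) (uK : u \notin K) (cK : c \notin K).

Definition par z := if z \in K then c else u.
Definition dtree : {set {set 'I_n}} := [set [set z; par z] | z in [set~ u]].

Lemma par_in z : par z = u \/ par z = c.
Proof. by rewrite /par; case: ifP; auto. Qed.

Lemma par_ne z : z != u -> par z != z.
Proof.
rewrite /par; case: ifP => hz hzu; last by rewrite eq_sym.
by apply: contraNneq cK => e; rewrite e.
Qed.

Lemma mem_dtree e : e \in dtree -> exists z, z != u /\ e = [set z; par z].
Proof. by case/imsetP => z hz he; exists z; rewrite -in_setC1. Qed.

Lemma edge_dtree z : z != u -> [set z; par z] \in dtree.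
Proof. by move=> hz; apply/imsetP; exists z; rewrite ?inE. Qed.

Lemma adj_sym (T : {set {set 'I_n}}) x y : adj T x y = adj T y x.
Proof. by rewrite /adj setUC. Qed.

Lemma leaf x y : x != u -> x != c -> adj dtree x y -> y = par x.
Proof.
move=> xu xc /mem_dtree [z [zu /set2_eq' [[-> ->]|[hx hy]]]] //.
by case: (par_in z) => h; move: xu xc; rewrite hx h eqxx.
Qed.

Definition hub x := if x == u then u else if x == c then c else par x.

Lemma hub_in x : hub x = u \/ hub x = c.
Proof. rewrite /hub; case: ifP; auto; case: ifP; auto => _ _; exact: par_in. Qed.

Lemma dist_hub x : dist_le dtree 1 x (hub x).
Proof.
rewrite /hub; case: eqP => [->|/eqP xu]; first exact: dist_mono (dist0 _ _).
case: eqP => [->|/eqP xc]; first exact: dist_mono (dist0 _ _).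
by apply: dist1; rewrite /adj edge_dtree.
Qed.

Lemma adj_uc : adj dtree c u.
Proof.
have -> : u = par c by rewrite /par (negbTE cK).
by rewrite /adj edge_dtree // eq_sym.
Qed.

Lemma dist_hubs x y : dist_le dtree 1 (hub x) (hub y).
Proof.
case: (hub_in x) => ->; case: (hub_in y) => ->;
  try exact: dist_mono (dist0 _ _); apply: dist1 => //; first by rewrite adj_sym adj_uc.
exact: adj_uc.
Qed.

Lemma dist_hub' x : dist_le dtree 1 (hub x) x.
Proof.
rewrite /hub; case: eqP => [->|/eqP xu]; first exact: dist_mono (dist0 _ _).
case: eqP => [->|/eqP xc]; first exact: dist_mono (dist0 _ _).
by apply: dist1; rewrite adj_sym /adj edge_dtree.
Qed.

Lemma dtree_dist x y : dist_le dtree 3 x y.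
Proof. exact: dist_cat (dist_cat (dist_hub x) (dist_hubs x y)) (dist_hub' y). Qed.

Lemma dtree_conn : connected_graph dtree.
Proof. by move=> x y; case: (dtree_dist x y) => s [_ h]; exists s. Qed.

Lemma dtree_sub : dtree \subset complete_edges n.
Proof.
apply/subsetP => e /mem_dtree [z [zu ->]].
by rewrite inE cards2 (eq_sym z) par_ne.
Qed.

Lemma dtree_acyclic : acyclic dtree.
Proof.
move=> cy ucy scy; apply/negP => ccy.
have [x xcy xuc] : exists2 x, x \in cy & x \notin [:: u; c].
  apply/exists_inP; apply: contraTT scy => /exists_inPn h.
  rewrite -ltnNge ltnS; have /(_ [:: u; c]) := uniq_leq_size ucy; apply => y /h.
  by case: (y \in [:: u; c]).
move: xuc; rewrite !inE negb_or => /andP[xu xc].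
case: (rot_to xcy) => i s hs.
move: ccy ucy scy; rewrite -(rot_cycle i) -(rot_uniq i) -(size_rot i) hs.
case: s hs => [|y s] hs //=; case: s hs => [|y2 s] hs //= .
move=> /and3P[hxy _]; rewrite rcons_path => /andP[_ hl].
case/and4P=> _ yns _ _ _.
have e1 := leaf xu xc hxy.
rewrite adj_sym in hl; have e2 := leaf xu xc hl.
move: yns; rewrite e1 -e2.
by rewrite mem_last.
Qed.

Lemma on_edge2 P Q x : on_edge p [set P; Q] x -> on_seg (p P) (p Q) x.
Proof.
case=> a [b [ab [/set2_eq' [[-> ->]|[-> ->]] //]]]; exact: on_seg_sym.
Qed.

Hypothesis hkey : forall w w' x, w \in K -> w' \notin K -> w' != u -> w' != c ->
  on_seg (p c) (p w) x -> on_seg (p u) (p w') x -> False.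

Lemma gpn i j k : i != j -> j != k -> i != k -> orient (p i) (p j) (p k) != 0%R.
Proof. exact: gp. Qed.

Lemma ne_aux z1 z2 x : z1 != z2 -> z1 != u -> z2 != u ->
  on_seg (p z1) (p (par z1)) x -> on_seg (p z2) (p (par z2)) x ->
  exists v, v \in [set z1; par z1] /\ v \in [set z2; par z2] /\ x = p v.
Proof.
move=> z12 z1u z2u s1 s2.
have s1' := on_seg_sym s1; have s2' := on_seg_sym s2.
have cu : c != u by rewrite eq_sym.
move: s1 s2 s1' s2'; rewrite /par.
case: (boolP (z1 \in K)) => k1; case: (boolP (z2 \in K)) => k2 s1 s2 s1' s2'.
- have cz1 : c != z1 by apply: contraNneq cK => ->.
  have cz2 : c != z2 by apply: contraNneq cK => ->.
  exists c; rewrite !set22; do 2!split=> //.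
  exact: shared (gpn cz1 z12 cz2) s1' s2'.
- have cz1 : c != z1 by apply: contraNneq cK => ->.
  case: (eqVneq z2 c) => [ez|z2c]; last by case: (hkey k1 k2 z2u z2c s1' s2').
  subst z2; exists c; rewrite set22 set21; do 2!split=> //.
  exact: shared (gpn cz1 (z1u) cu) s1' s2.
- have cz2 : c != z2 by apply: contraNneq cK => ->.
  case: (eqVneq z1 c) => [ez|z1c]; last by case: (hkey k2 k1 z1u z1c s2' s1').
  subst z1; exists c; rewrite set22 set21; do 2!split=> //.
  exact: shared (gpn cz2 (z2u) cu) s2' s1.
- have uz1 : u != z1 by rewrite eq_sym.
  have uz2 : u != z2 by rewrite eq_sym.
  exists u; rewrite !set22; do 2!split=> //.
  exact: shared (gpn uz1 z12 uz2) s1' s2'.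
Qed.

Lemma dtree_simple : simple_geo p dtree.
Proof.
move=> e f /mem_dtree[z1 [z1u ->]] /mem_dtree[z2 [z2u ->]] ne [x [he [hf hn]]].
apply: hn; apply: ne_aux => //; last exact: on_edge2.
- by apply: contraNneq ne => ->.
- exact: on_edge2.
Qed.

Lemma dtree_good : simple_trees_diam_le p 3 dtree.
Proof.
split; last by split; [exact: dtree_simple | exact: dtree_dist].
by split; [exact: dtree_sub | split; [exact: dtree_conn | exact: dtree_acyclic]].
Qed.
End Tree.


Lemma deg_sum n (B : {set {set 'I_n}}) : B \subset complete_edges n ->
  (\sum_(u : 'I_n) #|[set e in B | u \in e]| = 2 * #|B|)%N.
Proof.
move=> hB.
have h1 u : #|[set e in B | u \in e]| = (\sum_(e in B) (u \in e))%N.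
  rewrite -sum1_card big_mkcond [RHS]big_mkcond; apply: eq_bigr => e _.
  by rewrite !inE; case: (e \in B); case: (u \in e).
rewrite (eq_bigr _ (fun u _ => h1 u)) exchange_big /=.
rewrite (eq_bigr (fun _ => 2)); first by rewrite sum_nat_const mulnC.
move=> e eB.
have := subsetP hB e eB; rewrite inE => /eqP <-.
rewrite -sum1_card [RHS]big_mkcond; apply: eq_bigr => u _.
by case: (u \in e).
Qed.

Lemma low_deg n (B : {set {set 'I_n}}) : B \subset complete_edges n ->
  (#|B| < n)%N -> exists u : 'I_n, (#|[set e in B | u \in e]| <= 1)%N.
Proof.
move=> hB hn; apply/existsP; apply: contraTT hn; rewrite negb_exists => /forallP h.
rewrite -leqNgt -(leq_pmul2l (isT : (0 < 2)%N)) -deg_sum //.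
rewrite mulnC -{1}[n]card_ord -sum_nat_const leq_sum // => u _.
by rewrite ltnNge h.
Qed.

Section Main.
Variables (R : realFieldType) (n : nat) (p : 'I_n -> R * R).
Hypothesis gp : general_position p.
Variable B : {set {set 'I_n}}.
Hypothesis hB : B \subset complete_edges n.
Hypothesis n2 : (1 < n)%N.
Hypothesis Bsmall : (#|B| < n.-1)%N.
Local Open Scope ring_scope.

Lemma gpn' i j k : i != j -> j != k -> i != k -> orient (p i) (p j) (p k) != 0.
Proof. exact: gp. Qed.

Lemma case_deg0 u : [set e in B | u \in e] = set0 ->
  exists T, simple_trees_diam_le p 3 T /\ (forall e, e \in T -> e \notin B).
Proof.
move=> h0.
have [c cu] : exists c : 'I_n, c != u.
  have : (0 < #|[set~ u]|)%N by rewrite cardsC1 card_ord -ltnS prednK // ltnW.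
  by case/card_gt0P => c hc; exists c; rewrite -in_setC1.
have uc : u != c by rewrite eq_sym.
exists (dtree u c set0); split.
  apply: dtree_good => //; rewrite ?inE // => w w' x; by rewrite inE.
move=> e /mem_dtree [z [zu ->]]; rewrite /par inE.
apply/negP => hz.
have : [set z; u] \in [set e in B | u \in e] by rewrite inE hz set22.
by rewrite h0 inE.
Qed.

Section Deg1.
Variables (u a : 'I_n).
Hypotheses (ua : u != a) (uaB : [set u; a] \in B)
  (uonly : forall e, e \in B -> u \in e -> e = [set u; a]).

Definition O i j k := orient (p i) (p j) (p k).
Definition sg (c : 'I_n) : R := if 0 < O u a c then 1 else -1.
Definition KK c : {set 'I_n} := [set w | (w != u) && (w != c) &&
  ((w == a) || ((0 < sg c * O u a w) && (0 < sg c * O u w c)))].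

Lemma ltfalse (x : R) : 0 < x -> 0 < - x -> False.
Proof. by move=> h; rewrite oppr_gt0 => /(lt_trans h); rewrite ltxx. Qed.

Lemma O_sw i j k : O i k j = - O i j k.
Proof. exact: orient_sw. Qed.
Lemma O_xx i j : O i j j = 0.
Proof. exact: orient_yy. Qed.

Lemma sg_pos c : c != u -> c != a -> 0 < sg c * O u a c.
Proof.
move=> cu ca; have hO : O u a c != 0 by apply: gpn'; rewrite // eq_sym.
rewrite /sg; case: ifP => h; first by rewrite mul1r.
by rewrite mulN1r oppr_gt0 lt_neqAle hO /= leNgt h.
Qed.

Lemma sg_cases c : sg c = 1 \/ sg c = -1.
Proof. by rewrite /sg; case: ifP; auto. Qed.

Lemma a_in_KK c : c != u -> c != a -> a \in KK c.
Proof. by move=> cu ca; rewrite inE eq_sym ua eq_sym ca eqxx. Qed.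

Lemma KK_key c : c != u -> c != a -> forall w w' x, w \in KK c -> w' \notin KK c ->
  w' != u -> w' != c -> on_seg (p c) (p w) x -> on_seg (p u) (p w') x -> False.
Proof.
move=> cu ca w w' x wK w'K w'u w'c.
have spos := sg_pos cu ca.
move: wK; rewrite inE => /andP[/andP[wu wc] hw].
have w'a : w' != a by apply: contraNneq w'K => ->; exact: a_in_KK.
have hcw : orient (p c) (p w) (p u) != 0 by apply: gpn'; rewrite // eq_sym.
apply: (key (sg := sg c) hcw spos).
- case/orP: hw => [/eqP ->|/andP[h _]]; last exact: ltW.
  by rewrite -/(O u a a) O_xx mulr0.
- case/orP: hw => [/eqP ->|/andP[_ h]].
    by rewrite -/(O u c a) O_sw mulrN oppr_lt0.
  by rewrite -/(O u c w) O_sw mulrN oppr_lt0.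
- have h1 : sg c * O u a w' != 0.
    rewrite mulf_neq0 //; last by apply: gpn'; rewrite // eq_sym.
    by case: (sg_cases c) => ->; rewrite ?oppr_eq0 oner_eq0.
  case: (ltrgtP (sg c * O u a w') 0) => h2; [by left | | by rewrite h2 eqxx in h1].
  right; move: w'K; rewrite inE w'u w'c /= (negbTE w'a) h2 /= => h3.
  have h4 : O u w' c != 0 by apply: gpn'; rewrite // eq_sym.
  rewrite -/(O u c w') O_sw mulrN oppr_gt0 lt_neqAle (leNgt _ 0) h3 andbT.
  by rewrite mulf_neq0 //; case: (sg_cases c) => ->; rewrite ?oppr_eq0 oner_eq0.
Qed.

Lemma case_good c : c != u -> c != a ->
  (forall w, w \in KK c -> [set c; w] \notin B) ->
  exists T, simple_trees_diam_le p 3 T /\ (forall e, e \in T -> e \notin B).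
Proof.
move=> cu ca hg.
have uc : u != c by rewrite eq_sym.
have uK : u \notin KK c by rewrite inE eqxx.
have cK : c \notin KK c by rewrite inE eqxx andbF.
exists (dtree u c (KK c)); split.
  apply: (dtree_good gp uc cK). exact: (KK_key cu ca).
move=> e /mem_dtree [z [zu ->]]; rewrite /par; case: ifP => zK.
  by rewrite setUC; apply: hg.
apply/negP => hz; have := uonly hz; rewrite set22 => /(_ isT) /set2_eq' [[zu' _]|[za _]].
  by rewrite zu' eqxx in zu.
by move: zK; rewrite za (a_in_KK cu ca).
Qed.

Lemma counting : (forall c, c != u -> c != a -> exists2 w, w \in KK c & [set c; w] \in B) -> False.
Proof.
move=> hall.
pose g c := [set c; odflt c [pick w in KK c | [set c; w] \in B]].
have gP c : c != u -> c != a -> exists2 w, w \in KK c & g c = [set c; w] /\ [set c; w] \in B.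
  move=> cu ca; rewrite /g; case: pickP => [w /andP[h1 h2]|h]; first by exists w.
  by case: (hall c cu ca) => w h1 h2; have := h w; rewrite h1 h2.
pose C := [set c | (c != u) && (c != a)].
have hinj : {in C &, injective g}.
  move=> c1 c2; rewrite !inE => /andP[c1u c1a] /andP[c2u c2a] e.
  case: (gP _ c1u c1a) => w1 w1K [e1 _]; case: (gP _ c2u c2a) => w2 w2K [e2 _].
  move: e; rewrite e1 e2 => /set2_eq' [[//]|[ec1 ec2]]; subst w1 w2.
  move: w1K w2K; rewrite !inE (negbTE c2a) (negbTE c1a) /= => /andP[_ /andP[h1 h2]]
    /andP[_ /andP[h3 h4]].
  have p1 := sg_pos c1u c1a; have p2 := sg_pos c2u c2a.
  move: h4; rewrite -/(O u c1 c2) O_sw => h4.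
  move: h1 h2 h3 h4 p1 p2.
  rewrite -/(O u a c2) -/(O u c2 c1) -/(O u a c1).
  case: (sg_cases c1) => ->; case: (sg_cases c2) => ->; move: (O u a c2) (O u c2 c1) (O u a c1) => X Y Z h1 h2 h3 h4 p1 p2;
  rewrite ?mul1r ?mulN1r ?opprK in h1 h2 h3 h4 p1 p2;
  first [case: (ltfalse h2 h4) | case: (ltfalse p1 h3) | case: (ltfalse h3 p1) | case: (ltfalse h4 h2)].
have hsub : g @: C \subset B :\ [set u; a].
  apply/subsetP => e /imsetP [c]; rewrite inE => /andP[cu ca] ->.
  case: (gP _ cu ca) => w _ [-> wB]; rewrite !inE wB andbT.
  apply/eqP => /set2_eq' [[hc _]|[hc _]]; [by rewrite hc eqxx in cu | by rewrite hc eqxx in ca].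
have := subset_leq_card hsub; rewrite card_in_imset //.
have hd := cardsD1 [set u; a] B; rewrite uaB /= in hd.
have hC := cardsC [set u; a]; rewrite card_ord cards2 ua in hC.
have -> : #|C| = #|~: [set u; a]|.
  by apply: eq_card => x; rewrite !inE negb_or.
rewrite /= in hd hC; move: hd hC; move: #|~: [set u; a]| #|B :\ [set u; a]| => y x hd hC.
move: Bsmall; rewrite hd -hC; lia.
Qed.
End Deg1.

Lemma exists_tree :
  exists T, simple_trees_diam_le p 3 T /\ (forall e, e \in T -> e \notin B).
Proof.
have [u hu] := low_deg hB (leq_trans Bsmall (leq_pred n)).
move: hu; rewrite leq_eqVlt ltnS leqn0 => /orP[h1|/eqP h0]; last first.
  by apply: (case_deg0 (u := u)); apply/eqP; rewrite -cards_eq0; apply/eqP.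
case/cards1P: h1 => e0 he0.
have : e0 \in [set e in B | u \in e] by rewrite he0 set11.
rewrite inE => /andP[e0B ue0].
have [a [ua ea]] : exists a, u != a /\ e0 = [set u; a].
  have := subsetP hB _ e0B; rewrite inE => /cards2P [x [y [xy exy]]].
  move: ue0; rewrite exy => /set2P [->|->]; first by exists y.
  by exists x; rewrite eq_sym setUC.
have uaB : [set u; a] \in B by rewrite -ea.
have uonly : forall e, e \in B -> u \in e -> e = [set u; a].
  move=> e eB ue; rewrite -ea; apply/set1P; rewrite -he0 inE eB ue.
  done.
case: (boolP [exists c, (c != u) && (c != a) && [forall w in KK u a c, [set c; w] \notin B]]).
  case/existsP => c /andP[/andP[cu ca] /forall_inP hg].
  exact: (case_good ua uonly cu ca hg).
rewrite negb_exists => /forallP hn; exfalso; apply: (counting ua uaB).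
move=> c cu ca; have := hn c; rewrite cu ca /= negb_forall_in => /exists_inP [w wK].
by rewrite negbK => wB; exists w.
Qed.
End Main.


Theorem proposition1 (R : realFieldType) (n : nat) (p : 'I_n -> R * R)
  (p_inj : injective p) (p_gp : general_position p)
  (B : {set {set 'I_n}}) :
  blocker (simple_trees_diam_le p 3) B -> #|B| = (n - 1)%N.
Proof.
case=> hB [hbl hmin].
case: (leqP n 1) => hn.
  have -> : B = set0.
    apply/setP => e; rewrite inE; apply/negP => eB.
    have := subsetP hB e eB; rewrite inE => /eqP h2.
    have := max_card e; rewrite card_ord h2 => h; move: hn h; lia.
  by rewrite cards0; move: hn; lia.
have n0 : (0 < n)%N by apply: ltn_trans hn.
pose v0 := Ordinal n0.
pose S0 := [set e in complete_edges n | v0 \in e].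
have hS0 : (#|S0| <= n - 1)%N.
  have : S0 \subset (fun y => [set v0; y]) @: [set~ v0].
    apply/subsetP => e; rewrite inE => /andP[ec ve].
    move: ec; rewrite inE => /cards2P [x [y [xy exy]]].
    apply/imsetP; move: ve; rewrite exy => /set2P [hx|hy]; subst.
      by exists y => //; rewrite !inE eq_sym.
    by exists x; rewrite ?inE // setUC.
  move/subset_leq_card/leq_trans; apply; apply: leq_trans (leq_imset_card _ _) _.
  by rewrite cardsC1 card_ord subn1.
have hbS0 : blocks (simple_trees_diam_le p 3) S0.
  move=> T [[Tc [Tconn _]] _].
  have [v1 v10] : exists v1 : 'I_n, v1 != v0.
    have : (0 < #|[set~ v0]|)%N by rewrite cardsC1 card_ord -ltnS prednK.
    by case/card_gt0P => c hc; exists c; rewrite -in_setC1.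
  case: (Tconn v0 v1) => [[|y s] [ps ls]]; first by rewrite -ls eqxx in v10.
  move: ps => /= /andP[a0 _]; exists [set v0; y]; split => //.
  by rewrite inE (subsetP Tc _ a0) set21.
have S0c : S0 \subset complete_edges n.
  by apply/subsetP => e; rewrite inE => /andP[].
have le1 := hmin S0 S0c hbS0.
apply/eqP; rewrite eqn_leq (leq_trans le1 hS0) /=.
rewrite leqNgt; apply/negP => hlt.
have hlt' : (#|B| < n.-1)%N by rewrite -subn1.
have [T [hT hTB]] := exists_tree p_gp hB hn hlt'.
have [e [eB eT]] := hbl T hT.
by have := hTB e eT; rewrite eB.
Qed.
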